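(* Every interval graph admits a canonical dominating set.
   Context: A graph $G$ is an interval graph if there are closed intervals $I_v$, $v\in V(G)$, with $uv\in E(G)$ iff $I_u\cap I_v\ne\emptyset$. A set $D\subseteq V(G)$ is a dominating set if every vertex of $G$ is in $D$ or adjacent to a vertex of $D$. Two dominating sets $D,D'$ are adjacent if $|D\triangle D'|=1$. For dominating sets $D_p,D_q$ and an integer $k>0$, write $D_p\leftrightarrow_k D_q$ if there is a sequence $D_0=D_p,\dots,D_\ell=D_q$ ($\ell\ge0$) of dominating sets of $G$ with consecutive sets adjacent and $|D_i|\le k$ for all $i$. A minimum dominating set $D^*$ of $G$ is canonical if $D\leftrightarrow_{|D|+1} D^*$ for every dominating set $D$ of $G$. *)

(* Defs.v *)
From Stdlib Require Import Reals.
From mathcomp Require Import all_boot.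
Set Implicit Arguments. Unset Strict Implicit. Unset Printing Implicit Defensive.

(* A finite simple graph on vertex type T is given by a symmetric irreflexive
   relation e : rel T. *)

Definition interval_graph (T : finType) (e : rel T) : Prop :=
  exists (l r : T -> R),
    (forall v, Rle (l v) (r v)) /\
    (forall u v, u <> v ->
       (e u v <-> exists x : R, (Rle (l u) x /\ Rle x (r u)) /\ (Rle (l v) x /\ Rle x (r v)))).

Definition dominating (T : finType) (e : rel T) (D : {set T}) : bool :=
  [forall v, (v \in D) || [exists u in D, e u v]].

Definition ds_adjacent (T : finType) (D D' : {set T}) : bool :=
  #|(D :\: D') :|: (D' :\: D)| == 1.

Definition reconf (T : finType) (e : rel T) (k : nat) (Dp Dq : {set T}) : Prop :=
  exists s : seq {set T},
    [/\ path (@ds_adjacent T) Dp s, last Dp s = Dq &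
        all (fun D => dominating e D && (#|D| <= k)) (Dp :: s)].

Definition min_dominating (T : finType) (e : rel T) (D : {set T}) : Prop :=
  dominating e D /\ forall D' : {set T}, dominating e D' -> #|D| <= #|D'|.

Definition canonical_ds (T : finType) (e : rel T) (Ds : {set T}) : Prop :=
  min_dominating e Ds /\
  forall D : {set T}, dominating e D -> reconf e (#|D|.+1) D Ds.

(* Main.v *)
Require Import Defs.
From Stdlib Require Import Reals Lra.
From mathcomp Require Import all_boot.
Set Implicit Arguments. Unset Strict Implicit. Unset Printing Implicit Defensive.

Definition nbr (T : finType) (e : rel T) (u v : T) : bool := (u == v) || e u v.
Definition domby (T : finType) (e : rel T) (S : {set T}) (v : T) : bool :=
  [exists u in S, nbr e u v].
Definition II (T : finType) (l r : T -> R) (u v : T) : Prop :=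
  Rle (l u) (r v) /\ Rle (l v) (r u).

Lemma domP (T : finType) (e : rel T) (D : {set T}) :
  reflect (forall v, domby e D v) (dominating e D).
Proof.
apply: (iffP forallP) => H v.
- case/orP: (H v) => [vD | /existsP [u /andP [uD euv]]]; apply/existsP.
  + by exists v; rewrite vD /nbr eqxx.
  + by exists u; rewrite uD /nbr euv orbT.
- case/existsP: (H v) => u /andP [uD /orP [/eqP <- | euv]].
  + by rewrite uD.
  + by apply/orP; right; apply/existsP; exists u; rewrite uD.
Qed.

Lemma domby_sub (T : finType) (e : rel T) (S D : {set T}) v :
  S \subset D -> domby e S v -> domby e D v.
Proof.
move=> sSD /existsP [u /andP [uS h]]; apply/existsP; exists u.
by rewrite h (subsetP sSD).
Qed.

Lemma dom_sub (T : finType) (e : rel T) (S D : {set T}) :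
  S \subset D -> dominating e S -> dominating e D.
Proof. move=> sSD /domP H; apply/domP => v; exact: domby_sub sSD (H v). Qed.

Lemma reconf_refl (T : finType) (e : rel T) k (D : {set T}) :
  dominating e D -> #|D| <= k -> reconf e k D D.
Proof. by move=> hD hk; exists [::]; split => //=; rewrite hD hk. Qed.

Lemma reconf_cons (T : finType) (e : rel T) k (D D1 D2 : {set T}) :
  ds_adjacent D D1 -> dominating e D -> #|D| <= k ->
  reconf e k D1 D2 -> reconf e k D D2.
Proof.
move=> hadj hD hk [s [hp hl ha]]; exists (D1 :: s); split => /=.
- by rewrite hadj.
- done.
- by rewrite hD hk.
Qed.

Lemma adj_add (T : finType) (A : {set T}) x :
  x \notin A -> ds_adjacent A (x |: A) /\ ds_adjacent (x |: A) A.
Proof.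
move=> xA.
have E : (A :\: (x |: A)) :|: ((x |: A) :\: A) = [set x].
  apply/setP => z; rewrite !inE.
  by case: (z =P x) => [->|_]; rewrite ?(negbTE xA); case: (z \in A).
rewrite /ds_adjacent E setUC E cards1; done.
Qed.

Lemma reconf_shrink (T : finType) (e : rel T) k (S D : {set T}) :
  S \subset D -> dominating e S -> #|D| <= k -> reconf e k D S.
Proof.
move=> sSD hS; move: {2}(#|D :\: S|) (leqnn #|D :\: S|) => n.
elim: n D sSD => [|n IH] D sSD hn hk.
- move: hn; rewrite leqn0 cards_eq0 setD_eq0 => sDS.
  have E : D = S by apply/eqP; rewrite eqEsubset sDS sSD.
  by rewrite E in hk *; exact: reconf_refl hS hk.
- case: (set_0Vmem (D :\: S)) => [E | [x xDS]].
  + move/eqP: E; rewrite setD_eq0 => sDS.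
    have E : D = S by apply/eqP; rewrite eqEsubset sDS sSD.
    by rewrite E in hk *; exact: reconf_refl hS hk.
  + move: (xDS); rewrite inE => /andP [xS xD].
    have xD' : x \notin D :\ x by rewrite !inE eqxx.
    case: (adj_add xD') => _; rewrite setD1K // => hadj.
    apply: (reconf_cons hadj (dom_sub sSD hS) hk).
    have sSD' : S \subset D :\ x.
      apply/subsetP => z zS; rewrite !inE (subsetP sSD) // andbT.
      by apply/eqP => zx; move: xS; rewrite -zx zS.
    apply: IH => //.
    + have -> : (D :\ x) :\: S = (D :\: S) :\ x.
        by apply/setP => z; rewrite !inE; case: (z == x); case: (z \in S).
      move: hn; rewrite (cardsD1 x (D :\: S)) xDS add1n ltnS; done.
    + apply: leq_trans hk; rewrite (cardsD1 x D) xD add1n; exact: leqnSn.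
Qed.

Lemma ex_minR (T : eqType) (f : T -> R) (s : seq T) : s != [::] ->
  exists2 x, x \in s & forall y, y \in s -> Rle (f x) (f y).
Proof.
elim: s => // a s IH _. case: (eqVneq s [::]) => [-> | sne].
- exists a; first by rewrite inE eqxx.
  by move=> y; rewrite inE => /eqP ->; apply Rle_refl.
- case: (IH sne) => x xs hx. case: (Rle_dec (f a) (f x)) => h.
  + exists a; first by rewrite inE eqxx.
    move=> y; rewrite inE => /orP [/eqP -> | ys]; [apply Rle_refl | exact: Rle_trans h (hx y ys)].
  + exists x; first by rewrite inE xs orbT.
    move=> y; rewrite inE => /orP [/eqP -> | ys]; [lra | exact: hx].
Qed.

Lemma ex_minP (T : finType) (f : T -> R) (P : pred T) x0 : P x0 ->
  exists2 x, P x & forall y, P y -> Rle (f x) (f y).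
Proof.
move=> Px0.
have ne : enum P != [::].
  by apply/eqP => E; move: (mem_enum P x0); rewrite E in_nil; rewrite unfold_in Px0.
case: (ex_minR f ne) => x; rewrite mem_enum => Px hx.
by exists x => // y Py; apply: hx; rewrite mem_enum.
Qed.

Lemma base (T : finType) (e : rel T) (S : {set T}) : dominating e S ->
  exists G : {set T}, [/\ S \subset G, dominating e G &
     forall D, dominating e D -> S \subset D -> reconf e #|D|.+1 D G /\ #|G| <= #|D|].
Proof.
move=> hS; exists S; split => // D hD sSD; split.
- by apply: reconf_shrink.
- exact: subset_leq_card.
Qed.

Lemma main (T : finType) (e : rel T) (l r : T -> R) :
  (forall u v, nbr e u v <-> II l r u v) ->
  forall n (S : {set T}), #|[set w | ~~ domby e S w]| <= n ->
  exists G : {set T}, [/\ S \subset G, dominating e G &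
     forall D, dominating e D -> S \subset D -> reconf e #|D|.+1 D G /\ #|G| <= #|D|].
Proof.
move=> hI; elim => [|n IH] S hn.
- apply: base; apply/domP => w; apply: contraT => hw.
  move: hn; rewrite leqn0 cards_eq0 => /eqP/setP/(_ w); rewrite !inE hw; done.
- case: (boolP (dominating e S)) => hS; first exact: base.
  have [w0 hw0] : exists w, ~~ domby e S w.
    case: (pickP (fun w => ~~ domby e S w)) => [w hw | H]; first by exists w.
    by move: hS; have -> : dominating e S by apply/domP => w; move: (H w) => /negbFE.
  case: (ex_minP r (P := fun w => ~~ domby e S w) hw0) => u hu humin.
  have nuu : nbr e u u by rewrite /nbr eqxx.
  case: (ex_minP (fun v => Ropp (r v)) (P := fun v => nbr e v u) nuu) => g hg hgm.
  have hgmax : forall v, nbr e v u -> Rle (r v) (r g).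
    by move=> v hv; move: (hgm v hv); lra.
  set S' := g |: S.
  have sSS' : S \subset S' by apply/subsetP => z zS; rewrite !inE zS orbT.
  have hn' : #|[set w | ~~ domby e S' w]| <= n.
    rewrite -ltnS; apply: leq_trans hn; apply: proper_card; apply/properP; split.
    + apply/subsetP => z; rewrite !inE; apply: contra; exact: domby_sub.
    + exists u; rewrite !inE ?hu //= negbK; apply/existsP; exists g.
      by rewrite hg !inE eqxx.
  case: (IH S' hn') => G [sS'G domG HG].
  exists G; split => //; first exact: subset_trans sSS' sS'G.
  move=> D hD sSD.
  case gD: (g \in D).
    apply: HG => //; apply/subsetP => z; rewrite !inE => /orP [/eqP -> //|].
    exact: (subsetP sSD).
  have [y yD hyu] : exists2 y, y \in D & nbr e y u.
    by move/domP: hD => /(_ u) /existsP [y /andP [yD h]]; exists y.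
  have yS : y \notin S.
    apply/negP => yS; move/negP: hu; apply; apply/existsP; exists y; by rewrite yS hyu.
  have yg : y != g by apply/eqP => E; move: gD; rewrite -E yD.
  set D1 := g |: D. set D2 := D1 :\ y.
  have gD' : g \notin D by rewrite gD.
  have cD1 : #|D1| = #|D|.+1 by rewrite cardsU1 gD'.
  have yD1 : y \in D1 by rewrite !inE yD orbT.
  have cD2 : #|D2| = #|D| by move: cD1; rewrite (cardsD1 y D1) yD1 add1n => [[]].
  have sS'D2 : S' \subset D2.
    apply/subsetP => z; rewrite !inE => /orP [/eqP -> | zS].
    + by rewrite eq_sym yg eqxx.
    + rewrite (subsetP sSD) // !orbT andbT.
      by apply/eqP => zy; move: yS; rewrite -zy zS.
  have dD2 : dominating e D2.
    apply/domP => w; move/domP: hD => /(_ w) /existsP [z /andP [zD hzw]].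
    case: (eqVneq z y) => [ezy | nzy].
    + subst z. case: (boolP (domby e S w)) => hw.
      * exact: domby_sub (subset_trans sSS' sS'D2) hw.
      * apply/existsP; exists g; rewrite (subsetP sS'D2) ?inE ?eqxx //=.
        apply/hI. move: (humin w hw) (hgmax y hyu).
        case/hI: hg => h1 h2. case/hI: hyu => h3 h4. case/hI: hzw => h5 h6.
        move=> h7 h8; split; lra.
    + apply/existsP; exists z; rewrite hzw !inE nzy zD orbT; done.
  have [H2 ms2] := HG D2 dD2 sS'D2.
  rewrite cD2 in H2 ms2; split => //.
  have [adj1 _] := adj_add gD'.
  apply: (reconf_cons adj1 hD (leqnSn _)).
  have yD2 : y \notin D2 by rewrite !inE eqxx.
  have [_ adj2] := adj_add yD2.
  rewrite setD1K // in adj2.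
  apply: (reconf_cons adj2 (dom_sub (_ : D \subset D1) hD)) => //.
  + by apply/subsetP => z zD; rewrite !inE zD orbT.
  + by rewrite cD1.
Qed.

Theorem lemma11 (T : finType) (e : rel T) :
  symmetric e -> irreflexive e -> interval_graph e ->
  exists Ds : {set T}, canonical_ds e Ds.
Proof.
move=> _ _ [l [r [hlr hint]]].
have hI : forall u v, nbr e u v <-> II l r u v.
  move=> u v; case: (eqVneq u v) => [<- | neq].
  - rewrite /nbr eqxx; split => // _; split; apply hlr.
  - rewrite /nbr (negbTE neq) /=.
    have nv : u <> v by apply/eqP.
    rewrite (hint u v nv); split.
    + move=> [x [[h1 h2] [h3 h4]]]; split; lra.
    + move=> [h1 h2]; case: (Rle_dec (l u) (l v)) => h.
      * exists (l v); move: (hlr u) (hlr v); split; split; lra.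
      * exists (l u); move: (hlr u) (hlr v); split; split; lra.
case: (main hI (leqnn _) (S := set0)) => G [_ domG HG].
exists G; split.
- split => // D' hD'; exact: (HG D' hD' (sub0set _)).2.
- by move=> D hD; exact: (HG D hD (sub0set _)).1.
Qed.
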